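(* In $E^{\infty}_8$ let $b_k$ be the number of elements of length $k$ and, for $k\ge1$ and $1\le i\le8$, let $b_{k;i}$ be the number of elements of length $k$ whose smallest representative word in length-lexicographic order (with $x_1<\cdots<x_8$) begins with $x_i$. Then $b_0=1$, $b_{1;i}=1$, $b_k=\sum_{i=1}^8b_{k;i}$ for $k\ge1$, and for $k\ge2$: $$b_{k;j}=\sum_{i=\max(1,j-1)}^{8}b_{k-1;i}\quad(j\ne5),\qquad b_{k;5}=b_{k-1;3}+\sum_{i=5}^8b_{k-1;i}.$$
   Context: $E^{\infty}_8=\langle x_1,\dots,x_8\mid x_ix_j=x_jx_i \text{ whenever } \{x_i,x_j\}\text{ is not an edge}\rangle$, where the edges are $x_1x_2$, $x_2x_3$, $x_3x_4$, $x_3x_5$, $x_5x_6$, $x_6x_7$, $x_7x_8$. *)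

(* Defs.v *)
From mathcomp Require Import all_boot.
Set Implicit Arguments. Unset Strict Implicit. Unset Printing Implicit Defensive.

(* Letters: x : 'I_8 stands for the generator x_{x+1}. *)
Definition letter := 'I_8.

(* Edges of the defining graph, on 1-based indices. *)
Definition edge (a b : nat) : bool :=
  [|| [&& a == 1 & b == 2], [&& a == 2 & b == 3], [&& a == 3 & b == 4],
      [&& a == 3 & b == 5], [&& a == 5 & b == 6], [&& a == 6 & b == 7]
    | [&& a == 7 & b == 8]].

Definition adj (a b : nat) : bool := edge a b || edge b a.

Definition commuting (x y : letter) : bool := ~~ adj (val x).+1 (val y).+1.

Definition swap_at (i : nat) (s : seq letter) : seq letter :=
  take i s ++ [:: nth ord0 s i.+1; nth ord0 s i] ++ drop i.+2 s.

Definition stepb (s t : seq letter) : bool :=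
  has (fun i => [&& i.+1 < size s, commuting (nth ord0 s i) (nth ord0 s i.+1)
                 & t == swap_at i s]) (iota 0 (size s)).

(* Words of length k; two words represent the same element of E^oo_8 iff
   they are connected by elementary commutation steps. *)
Definition stepR (k : nat) : rel (k.-tuple letter) := fun u v => stepb u v.

Definition cls (k : nat) (w : k.-tuple letter) : {set k.-tuple letter} :=
  [set v | connect (@stepR k) w v].

Definition elements (k : nat) : {set {set k.-tuple letter}} :=
  [set cls w | w in [set: k.-tuple letter]].

Definition b (k : nat) : nat := #|elements k|.

Fixpoint lexle (s t : seq nat) : bool :=
  match s, t with
  | a :: s', c :: t' => (a < c) || ((a == c) && lexle s' t')
  | _, _ => true
  end.

Definition is_min (k : nat) (C : {set k.-tuple letter}) (w : k.-tuple letter) : bool :=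
  (w \in C) && [forall v in C, lexle (map val w) (map val v)].

(* b_{k;j} (j is 1-based): number of elements of length k whose smallest
   representative word begins with x_j. *)
Definition bf (k j : nat) : nat :=
  #|[set C in elements k |
      [exists w, is_min C w && (ohead (map (fun x : letter => (val x).+1) w) == Some j)]]|.

(* Main.v *)
Require Import Defs.
From mathcomp Require Import all_boot zify.
Set Implicit Arguments. Unset Strict Implicit. Unset Printing Implicit Defensive.

Definition step (s t : seq letter) : Prop :=
  exists u x y v, [/\ commuting x y, s = u ++ x :: y :: v & t = u ++ y :: x :: v].

Inductive eqv : seq letter -> seq letter -> Prop :=
| eqv_refl s : eqv s s
| eqv_step s t u : step s t -> eqv t u -> eqv s u.

Lemma commutingC x y : commuting x y = commuting y x.
Proof. by rewrite /commuting /adj orbC. Qed.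

Lemma step_sym s t : step s t -> step t s.
Proof. case=> u [x [y [v [H -> ->]]]]; exists u, y, x, v; split=> //; by rewrite commutingC. Qed.

Lemma eqv_trans s t u : eqv s t -> eqv t u -> eqv s u.
Proof. elim=> // s1 t1 u1 H _ IH /IH; exact: eqv_step. Qed.

Lemma eqv1 s t : step s t -> eqv s t.
Proof. move=> H; apply: eqv_step H (eqv_refl _). Qed.

Lemma eqv_sym s t : eqv s t -> eqv t s.
Proof.
elim=> [//|s1 t1 u1 H _ IH]; first exact: eqv_refl.
apply: eqv_trans IH (eqv1 (step_sym H)).
Qed.

Lemma step_size s t : step s t -> size s = size t.
Proof. by case=> u [x [y [v [_ -> ->]]]]; rewrite !size_cat. Qed.

Lemma eqv_size s t : eqv s t -> size s = size t.
Proof. by elim=> // s1 t1 u1 /step_size -> _ ->. Qed.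

Lemma step_cat a s t : step s t -> step (a ++ s) (a ++ t).
Proof. case=> u [x [y [v [H -> ->]]]]; exists (a ++ u), x, y, v; by rewrite !catA. Qed.

Lemma eqv_cat a s t : eqv s t -> eqv (a ++ s) (a ++ t).
Proof.
elim=> [s1|s1 t1 u1 H _ IH]; first exact: eqv_refl.
exact: eqv_step (step_cat a H) IH.
Qed.

Lemma eqv_cons a s t : eqv s t -> eqv (a :: s) (a :: t).
Proof. exact: (@eqv_cat [:: a]). Qed.

Lemma move_front c s t : all (commuting c) s -> eqv (s ++ c :: t) (c :: s ++ t).
Proof.
elim: s => [|a s IH] /=; first by move=> _; exact: eqv_refl.
case/andP=> Hca /IH Hs.
apply: eqv_trans (eqv_cons a Hs) _.
apply: eqv1; exists [::], a, c, (s ++ t); split=> //; by rewrite commutingC.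
Qed.

Lemma stepb_step s t : stepb s t -> step s t.
Proof.
case/hasP=> i _ /and3P [Hi Hc /eqP ->].
exists (take i s), (nth ord0 s i), (nth ord0 s i.+1), (drop i.+2 s); split=> //.
rewrite -{1}(cat_take_drop i s); congr (_ ++ _).
rewrite (drop_nth ord0) ?(ltn_trans _ Hi) //.
by rewrite (drop_nth ord0 Hi).
Qed.

Lemma step_stepb s t : step s t -> stepb s t.
Proof.
case=> u [x [y [v [H -> ->]]]].
apply/hasP; exists (size u).
  by rewrite mem_iota /= size_cat /=; lia.
rewrite size_cat /=.
have Hl : (size u).+1 < size u + (size v).+2 by lia.
rewrite Hl /= !nth_cat ltnn subnn /= ltnNge leqnSn /= subSnn /=.
rewrite H /swap_at take_size_cat //.
rewrite andTb; apply/eqP; congr (_ ++ _).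
clear H Hl; elim: u => /= [|a u IH]; by rewrite ?drop0.
Qed.

Lemma step_front u x y r c s1 t1 : commuting x y ->
  u ++ y :: x :: r = s1 ++ c :: t1 -> c \notin s1 -> all (commuting c) s1 ->
  exists s t, [/\ u ++ x :: y :: r = s ++ c :: t, c \notin s,
     all (commuting c) s & eqv (s1 ++ t1) (s ++ t)].
Proof.
move=> Hxy; elim: u s1 => [|a u IH] [|d s1] /=.
- case=> <- <-; case: (eqVneq x y) => [->|Hxc] _ _.
    by exists [::], [:: y & r]; split=> //; exact: eqv_refl.
  exists [:: x], r; split=> //=; first by rewrite inE eq_sym.
    by rewrite commutingC Hxy.
  exact: eqv_refl.
- case=> <-; case: s1 => [|e s2] /=.
    case=> -> ->; rewrite inE => Hyc; case/andP=> Hcy _.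
    by exists [::], [:: y & t1]; split=> //; exact: eqv_refl.
  case=> <- ->; rewrite !inE negb_or => /andP [Hyc]; rewrite negb_or => /andP [Hxc Hs2].
  case/and3P=> Hcy Hcx Hcs.
  exists [:: x, y & s2], t1; split=> //=.
  + by rewrite !inE negb_or Hxc negb_or Hyc.
  + by rewrite Hcx Hcy.
  apply: eqv1; exists [::], y, x, (s2 ++ t1); split=> //; by rewrite commutingC.
- case=> -> <- _ _; exists [::], (u ++ [:: x, y & r]); split=> //.
  apply: eqv1; exists u, y, x, r; split=> //; by rewrite commutingC.
- case=> -> /IH {}IH; rewrite inE negb_or => /andP [Had Hs1] /andP [Hca Hcs].
  have [s [t [E1 E2 E3 E4]]] := IH Hs1 Hcs.
  exists (d :: s), t; split=> /=; first by rewrite E1.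
  + by rewrite inE negb_or Had.
  + by rewrite Hca.
  exact: eqv_cons.
Qed.

Lemma first_letter w v : eqv w v -> forall c v', v = c :: v' ->
  exists s t, [/\ w = s ++ c :: t, c \notin s, all (commuting c) s & eqv v' (s ++ t)].
Proof.
elim=> [s1|w1 w2 v1 Hst _ IH] c v' Ev.
  by exists [::], v'; rewrite Ev; split=> //; exact: eqv_refl.
have [s1 [t1 [E1 E2 E3 E4]]] := IH c v' Ev.
case: Hst => u [x [y [r [Hxy Ew1 Ew2]]]].
rewrite Ew2 in E1.
have [s [t [F1 F2 F3 F4]]] := step_front Hxy E1 E2 E3.
exists s, t; split=> //; first by rewrite Ew1.
exact: eqv_trans E4 F4.
Qed.

Definition lx (s t : seq letter) := lexle (map val s) (map val t).
Definition ismin (m : seq letter) := forall v, eqv m v -> lx m v.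
Definition allowed (j h : nat) := (j <= h) || adj h j.

Lemma lexle_refl s : lexle s s.
Proof. by elim: s => //= a s ->; rewrite eqxx orbT. Qed.

Lemma lexle_total s t : lexle s t || lexle t s.
Proof.
elim: s t => [|a s IH] [|c t] //=.
case: (ltngtP a c) => //= ->; by rewrite eqxx IH.
Qed.

Lemma lexle_trans s t u : size s = size t -> size t = size u ->
  lexle s t -> lexle t u -> lexle s u.
Proof.
elim: s t u => [|a s IH] [|b t] [|c u] //= [Hst] [Htu].
case/orP=> [Hab|/andP [/eqP <- H1]]; case/orP=> [Hbc|/andP [/eqP <- H2]].
- by rewrite (ltn_trans Hab Hbc).
- by rewrite Hab.
- by rewrite Hbc.
- by rewrite eqxx (IH _ _ Hst Htu H1 H2) orbT.
Qed.

Lemma lexle_anti s t : size s = size t -> lexle s t -> lexle t s -> s = t.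
Proof.
elim: s t => [|a s IH] [|c t] //= [Hst].
case: (ltngtP a c) => [Hac|Hca|<-] /=.
- by [].
- by [].
by move=> H1 H2; rewrite (IH _ Hst H1 H2).
Qed.

Lemma ismin_tail a m : ismin (a :: m) -> ismin m.
Proof.
move=> H v /(eqv_cons a) /H; by rewrite /lx /= ltnn eqxx.
Qed.

Lemma ismin_allowed a c m : ismin (a :: c :: m) -> allowed (val a).+1 (val c).+1.
Proof.
move=> H; rewrite /allowed ltnS; case: leqP => //= Hca.
apply: contraT => Hadj.
have : eqv (a :: c :: m) (c :: a :: m).
  by apply: eqv1; exists [::], a, c, m; split=> //; rewrite /commuting /adj orbC.
move/H; rewrite /lx /= ltnNge (ltnW Hca) /= (gtn_eqF Hca) //.
Qed.

Lemma fin_fact0 : all (fun a => all (fun c => all (fun i =>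
  ~~ [&& i < c, c < a, ~~ adj c.+1 i.+1 & allowed a.+1 i.+1]) (iota 0 8)) (iota 0 8)) (iota 0 8).
Proof. exact: erefl. Qed.

Lemma fin_fact (a c i : letter) :
  ~~ [&& val i < val c, val c < val a, commuting c i & allowed (val a).+1 (val i).+1].
Proof.
have := fin_fact0; move/allP/(_ (val a)); rewrite mem_iota ltn_ord => /(_ isT).
move/allP/(_ (val c)); rewrite mem_iota ltn_ord => /(_ isT).
move/allP/(_ (val i)); rewrite mem_iota ltn_ord => /(_ isT).
by [].
Qed.

Lemma ismin_cons a i m : ismin (i :: m) -> allowed (val a).+1 (val i).+1 ->
  ismin (a :: i :: m).
Proof.
move=> Hm Hal [|c v'] Hv; first by have := eqv_size Hv.
have [s [t [E1 E2 E3 E4]]] := first_letter Hv (erefl _).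
case: s E1 E2 E3 E4 => [|d s1] /=.
  case=> -> Et _ _ E4; rewrite /lx /= ltnn eqxx /=.
  by apply: Hm; rewrite Et; exact: eqv_sym.
case=> <- Eim; rewrite inE negb_or => /andP [Hca Hcs] /andP [Hcoa Hcall] _.
rewrite /lx /=; case: (ltngtP (val a) (val c)) => //= [Hac|Hac]; last first.
  by move/val_inj: Hac Hca => ->; rewrite eqxx.
exfalso.
have H := Hm (c :: s1 ++ t); rewrite {1}Eim in H.
move: (H (move_front t Hcall)); rewrite /lx /=.
clear H; case: s1 Eim Hcs Hcall => [|e s2] /=.
  case=> Eic _ _ _ _; move: Hal; rewrite Eic /allowed ltnS leqNgt Hac /=.
  by move: Hcoa; rewrite /commuting /adj => /negbTE ->.
case=> <- _; rewrite inE negb_or => /andP [Hci _] /andP [Hcoi _].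
case/orP=> [Hic|/andP [/eqP /val_inj Hic _]]; last by rewrite Hic eqxx in Hci.
have := fin_fact a c i.
by rewrite Hic Hac Hcoi Hal.
Qed.

Lemma eqv_connect k s t : eqv s t -> forall u v : k.-tuple letter,
  val u = s -> val v = t -> connect (@stepR k) u v.
Proof.
elim=> [s0|s0 t0 r Hst _ IH] u v Eu Ev.
  by rewrite (val_inj (etrans Eu (esym Ev))); exact: connect0.
have Ht : size t0 == k by rewrite -(step_size Hst) -Eu size_tuple.
apply: (connect_trans (connect1 _) (IH (Tuple Ht) v erefl Ev)).
by rewrite /stepR /= Eu; exact: step_stepb.
Qed.

Lemma connectE k (u v : k.-tuple letter) : connect (@stepR k) u v <-> eqv u v.
Proof.
split; last by move=> H; exact: eqv_connect H u v erefl erefl.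
case/connectP=> p; elim: p u => [|x p IH] u /=; first by move=> _ ->; exact: eqv_refl.
case/andP=> /stepb_step Hux /IH {}IH /IH; exact: eqv_step.
Qed.

Lemma in_cls k (w v : k.-tuple letter) : (v \in cls w) <-> eqv w v.
Proof. by rewrite inE; exact: connectE. Qed.

Lemma eqv_tuple k (m : k.-tuple letter) v : eqv m v -> {t : k.-tuple letter | val t = v}.
Proof.
move=> H; have Hv : size v == k by rewrite -(eqv_size H) size_tuple.
by exists (Tuple Hv).
Qed.

Lemma is_minP k (w m : k.-tuple letter) : is_min (cls w) m <-> eqv w m /\ ismin m.
Proof.
split.
  case/andP=> /in_cls Hm /forall_inP H; split=> // v Hmv.
  have [t Et] := eqv_tuple Hmv.
  rewrite -Et; apply: H; apply/in_cls; rewrite Et; exact: eqv_trans Hm Hmv.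
case=> Hm Hmin; apply/andP; split; first exact/in_cls.
apply/forall_inP => v /in_cls Hv; apply: Hmin.
exact: eqv_trans (eqv_sym Hm) Hv.
Qed.

Lemma cls_eq k (w v : k.-tuple letter) : eqv w v -> cls w = cls v.
Proof.
move=> H; apply/setP => x; apply/idP/idP => /in_cls Hx; apply/in_cls.
  exact: eqv_trans (eqv_sym H) Hx.
exact: eqv_trans H Hx.
Qed.

Definition tlx k (u v : k.-tuple letter) := lx u v.

Lemma exists_min k (w : k.-tuple letter) : exists m : k.-tuple letter, is_min (cls w) m.
Proof.
have Htot : total (@tlx k) by move=> u v; exact: lexle_total.
have Htr : transitive (@tlx k).
  move=> v u x; apply: lexle_trans; by rewrite !size_map !size_tuple.
set s := sort (@tlx k) (enum (cls w)).
have Hws : w \in s by rewrite mem_sort mem_enum; apply/in_cls; exact: eqv_refl.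
case Es : s Hws => [|m s'] //= _.
have Hm : m \in cls w by rewrite -mem_enum -(mem_sort (@tlx k)) -/s Es mem_head.
have Hsort : sorted (@tlx k) s by exact: sort_sorted.
rewrite Es /= in Hsort.
have Hall := order_path_min Htr Hsort.
exists m; apply/andP; split=> //; apply/forall_inP => v Hv.
have : v \in m :: s' by rewrite -Es mem_sort mem_enum.
rewrite inE; case/orP=> [/eqP ->|Hvs]; first exact: lexle_refl.
exact: (allP Hall).
Qed.

Lemma is_min_uniq k (C : {set k.-tuple letter}) m1 m2 :
  is_min C m1 -> is_min C m2 -> m1 = m2.
Proof.
case/andP=> H1 /forall_inP H1' /andP [H2 /forall_inP H2'].
apply: val_inj; apply: (inj_map val_inj); apply: lexle_anti.
- by rewrite !size_map !size_tuple.
- exact: H1'.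
- exact: H2'.
Qed.

Definition minw k (C : {set k.-tuple letter}) : k.-tuple letter :=
  odflt (nseq_tuple k ord0) [pick w | is_min C w].

Definition hmin k (C : {set k.-tuple letter}) : nat :=
  head 0 (map (fun x : letter => (val x).+1) (minw C)).

Lemma elementsP k (C : {set k.-tuple letter}) : C \in elements k -> exists w, C = cls w.
Proof. by case/imsetP=> w _ ->; exists w. Qed.

Lemma minwP k (C : {set k.-tuple letter}) : C \in elements k -> is_min C (minw C).
Proof.
case/elementsP=> w ->; rewrite /minw; case: pickP => [x //|H].
have [m Hm] := exists_min w; by rewrite H in Hm.
Qed.

Lemma hmin_min k (C : {set k.+1.-tuple letter}) (x : letter) (m : k.-tuple letter) :
  is_min C [tuple of x :: m] -> hmin C = (val x).+1.
Proof.
move=> H; rewrite /hmin /minw; case: pickP => [y Hy|Hn].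
  by rewrite (is_min_uniq Hy H).
by move: (Hn [tuple of x :: m]); rewrite H.
Qed.

Lemma minw_cons k (C : {set k.+1.-tuple letter}) : C \in elements k.+1 ->
  is_min C [tuple of thead (minw C) :: behead_tuple (minw C)].
Proof. move/minwP; by rewrite -tuple_eta. Qed.

Lemma hmin_head k (C : {set k.+1.-tuple letter}) : C \in elements k.+1 ->
  hmin C = (val (thead (minw C))).+1.
Proof. by move/minw_cons/hmin_min. Qed.

Lemma hmin_range k (C : {set k.+1.-tuple letter}) : C \in elements k.+1 ->
  0 < hmin C < 9.
Proof. by move/hmin_head ->; apply/andP; split=> //; rewrite ltnS; exact: ltn_ord. Qed.

Lemma bfE k j : bf k.+1 j = #|[set C in elements k.+1 | hmin C == j]|.
Proof.
rewrite /bf; apply: eq_card => C; rewrite !inE.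
case HC : (C \in elements k.+1) => //=.
apply/existsP/idP.
  case=> w /andP [Hw /eqP Ej]; move: Hw Ej; case/tupleP: w => x m Hw.
  by rewrite (hmin_min Hw) /= => -[->].
move/eqP=> <-; exists [tuple of thead (minw C) :: behead_tuple (minw C)].
by rewrite minw_cons //= (hmin_head HC).
Qed.

Lemma elem_min k (D : {set k.-tuple letter}) : D \in elements k ->
  D = cls (minw D) /\ ismin (minw D).
Proof.
move=> HD; have := minwP HD; case/elementsP: HD => w -> /is_minP [H1 H2].
by split=> //; exact: cls_eq.
Qed.

Lemma ismin_is_min k (t : k.-tuple letter) : ismin t -> is_min (cls t) t.
Proof. by move=> H; apply/is_minP; split=> //; exact: eqv_refl. Qed.

Lemma tuple_seq k (t : k.+1.-tuple letter) : val t = thead t :: behead t.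
Proof. by rewrite {1}(tuple_eta t). Qed.

Definition jl (j : nat) : letter := inord j.-1.
Lemma jlE j : 0 < j < 9 -> (val (jl j)).+1 = j.
Proof. move=> Hj; rewrite /jl /= inordK; lia. Qed.

Definition gmap k j (D : {set k.+1.-tuple letter}) : {set k.+2.-tuple letter} :=
  cls [tuple of jl j :: minw D].

Lemma g_ismin k j D : 0 < j < 9 -> D \in elements k.+1 -> allowed j (hmin D) ->
  ismin [tuple of jl j :: minw D].
Proof.
move=> Hj HD Hal; have [_ Hm] := elem_min HD.
rewrite /= tuple_seq; apply: ismin_cons; first by rewrite -tuple_seq.
by rewrite jlE // -(hmin_head HD).
Qed.

Lemma bij k j : 0 < j < 9 ->  #|[set C in elements k.+2 | hmin C == j]| =
            #|[set D in elements k.+1 | allowed j (hmin D)]|.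
Proof.
move=> Hj; pose g := @gmap k j.
have Hmin D : D \in [set D in elements k.+1 | allowed j (hmin D)] ->
   is_min (g D) [tuple of jl j :: minw D].
  by rewrite inE => /andP [HD Hal]; apply: ismin_is_min; exact: g_ismin.
rewrite -(@card_in_imset _ _ g); last first.
  move=> D1 D2 H1 H2 E.
  have H1' := Hmin _ H1; rewrite E in H1'.
  move: (is_min_uniq H1' (Hmin _ H2)) => /(congr1 val) /= [] /val_inj Em.
  rewrite inE in H1; rewrite inE in H2; move/andP: H1 => [/elem_min [E1 _] _].
  move/andP: H2 => [/elem_min [E2 _] _].
  by rewrite E1 E2 Em.
apply: esym; apply: eq_card => C; apply/imsetP/idP.
  case=> D HD ->; rewrite inE; apply/andP; split.
    by rewrite /g; apply: imset_f; exact: in_setT.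
  by have := Hmin _ HD => /hmin_min ->; rewrite (jlE Hj).
rewrite inE => /andP [HC /eqP Ej].
have [EC HmC] := elem_min HC.
set mC := minw C in EC HmC.
have Eh : thead mC = jl j.
  apply: val_inj; rewrite /jl /= inordK; first by rewrite -Ej (hmin_head HC).
  by rewrite -Ej (hmin_head HC) /=; exact: ltn_ord.
set m' := behead_tuple mC.
have Hm' : ismin m' by move: HmC; rewrite tuple_seq; exact: ismin_tail.
have HD : cls m' \in elements k.+1 by apply/imsetP; exists m'.
have Em' : minw (cls m') = m'.
  exact: is_min_uniq (minwP HD) (ismin_is_min Hm').
exists (cls m').
  rewrite inE HD /= (hmin_head HD) Em'.
  have E2 : behead mC = thead m' :: behead m' by rewrite -tuple_seq.
  move: HmC; rewrite tuple_seq Eh E2 => /ismin_allowed.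
  by rewrite (jlE Hj).
rewrite /g /gmap Em' EC; congr cls; apply: val_inj; by rewrite /= tuple_seq Eh.
Qed.


Lemma card_sum (T : finType) (A : {set T}) (p : pred T) :
  #|[set x in A | p x]| = \sum_(x in A) p x.
Proof.
rewrite -sum1_card (eq_bigl (fun x => (x \in A) && p x)); last by move=> x; rewrite inE.
rewrite -big_mkcondr /= big_mkcond /=; apply: eq_bigr => x _.
by case: (x \in A); case: (p x).
Qed.

Lemma sum_range a n h : \sum_(a <= i < n) (h == i) = (a <= h < n).
Proof.
elim: n => [|n IH]; first by rewrite big_geq // ltn0 andbF.
case: (leqP a n) => Han.
  rewrite big_nat_recr //= IH; case: (ltngtP h n) => [Hh|Hh|->].
  - by rewrite ltnS (ltnW Hh) andbT; case: (a <= h).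
  - by rewrite ltnS (leqNgt h n) Hh !andbF.
  - by rewrite andbF Han leqnn.
rewrite big_geq //; case: (leqP a h) => // Hah.
by rewrite ltnS (leqNgt h n) (leq_trans Han Hah) andbF.
Qed.

Lemma sum_bf k a n : \sum_(a <= i < n) bf k.+1 i =
  \sum_(C in elements k.+1) (a <= hmin C < n).
Proof.
under eq_bigr => i _ do rewrite bfE card_sum.
rewrite exchange_big /=; apply: eq_bigr => C _; exact: sum_range.
Qed.

Lemma fact_a : all (fun j => all (fun h => (j == 5) ||
   (allowed j h == (maxn 1 j.-1 <= h < 9))) (iota 1 8)) (iota 1 8).
Proof. exact: erefl. Qed.

Lemma fact_b : all (fun h => (allowed 5 h : nat) == (h == 3) + (5 <= h < 9)) (iota 1 8).
Proof. exact: erefl. Qed.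

Lemma allowed_a j h : 0 < j < 9 -> 0 < h < 9 -> j != 5 ->
  allowed j h = (maxn 1 j.-1 <= h < 9).
Proof.
move=> Hj Hh Hj5; have := fact_a; move/allP/(_ j); rewrite mem_iota add1n => /(_ Hj).
move/allP/(_ h); rewrite mem_iota add1n => /(_ Hh).
by rewrite (negbTE Hj5) => /eqP.
Qed.

Lemma allowed_b h : 0 < h < 9 -> (allowed 5 h : nat) = (h == 3) + (5 <= h < 9).
Proof.
move=> Hh; have := fact_b; move/allP/(_ h); rewrite mem_iota add1n => /(_ Hh) /eqP. done.
Qed.

Lemma eqv_one0 s t : eqv s t -> forall x, s = [:: x] -> t = [:: x].
Proof.
elim=> [//|s0 t0 u0 [u1 [x1 [y1 [v1 [_ Es _]]]]] _ _] x Ex.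
by rewrite Ex in Es; case: u1 Es => [|? [|? ?]].
Qed.

Lemma eqv_one (x : letter) v : eqv [:: x] v -> v = [:: x].
Proof. by move/eqv_one0; apply. Qed.

Lemma theorem_parts :
  b 0 = 1 /\
  (forall i, 1 <= i <= 8 -> bf 1 i = 1) /\
  (forall k, 1 <= k -> b k = \sum_(1 <= i < 9) bf k i) /\
  (forall k j, 2 <= k -> 1 <= j <= 8 -> j != 5 ->
     bf k j = \sum_(maxn 1 j.-1 <= i < 9) bf k.-1 i) /\
  (forall k, 2 <= k -> bf k 5 = bf k.-1 3 + \sum_(5 <= i < 9) bf k.-1 i).
Proof.
split.
  rewrite /b /elements.
  have -> : [set: 0.-tuple letter] = [set [tuple]].
    by apply/setP => t; rewrite (tuple0 t) !inE eqxx.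
  by rewrite imset_set1 cards1.
split.
  move=> i Hi; rewrite bfE.
  set x : letter := inord i.-1.
  have Hmin1 (y : letter) : is_min (cls [tuple y]) [tuple of y :: [tuple]].
    apply: ismin_is_min => v /eqv_one ->; exact: lexle_refl.
  transitivity #|[set cls [tuple x]]|; last exact: cards1.
  apply: eq_card => C; rewrite !inE.
  apply/andP/eqP.
    case=> /elementsP [w ->]; case/tupleP: w => y t; rewrite (tuple0 t).
    move: (Hmin1 y); rewrite /= => /hmin_min -> /eqP Ey.
    congr cls; congr [tuple _]; apply: val_inj; rewrite /x /= -Ey /= inordK //.
  move=> ->; split; first by apply/imsetP; exists [tuple x].
  move: (Hmin1 x) => /hmin_min ->; rewrite /x /= inordK //.
    by apply/eqP; lia.
  lia.
split.
  case=> // k _; rewrite sum_bf /b -sum1_card.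
  apply: eq_bigr => C HC; by rewrite hmin_range.
split.
  case=> [|[|k]] // j _ Hj Hj5 /=.
  rewrite bfE bij // card_sum sum_bf; apply: eq_bigr => D HD.
  by rewrite allowed_a // hmin_range.
case=> [|[|k]] // _ /=.
rewrite bfE bij // card_sum bfE card_sum sum_bf -big_split /=.
by apply: eq_bigr => D HD; rewrite allowed_b // hmin_range.
Qed.

Theorem lemma9 :
  b 0 = 1 /\
  (forall i, 1 <= i <= 8 -> bf 1 i = 1) /\
  (forall k, 1 <= k -> b k = \sum_(1 <= i < 9) bf k i) /\
  (forall k j, 2 <= k -> 1 <= j <= 8 -> j != 5 ->
     bf k j = \sum_(maxn 1 j.-1 <= i < 9) bf k.-1 i) /\
  (forall k, 2 <= k -> bf k 5 = bf k.-1 3 + \sum_(5 <= i < 9) bf k.-1 i).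
Proof. exact: theorem_parts. Qed.
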